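(* Fix a Bergman tree $\mathcal{T}_n$ with parameter $\lambda>0$. There exists $\varrho>0$ such that for every $\alpha\in\mathcal{T}_n$ with $\alpha\neq o$, $$\bigcup_{\beta\ge\alpha}K_\beta\subseteq V^{\varrho}_{c_\alpha},\qquad\text{where } V^\varrho_z=\Big\{w\in\mathbb{B}_n:\Big|1-w\cdot\tfrac{z}{|z|}\Big|\le\varrho(1-|z|)\Big\}.$$
   Context: Notation: $\mathbb{B}_n$ is the open unit ball of $\mathbb{C}^n$, $z\cdot w=\sum_j z_j\overline{w_j}$. For $z\in\mathbb{B}_n$, $\varphi_z$ is the involutive automorphism of $\mathbb{B}_n$ interchanging $0$ and $z$; the Bergman metric is $d(z,w)=\frac12\log\frac{1+|\varphi_z(w)|}{1-|\varphi_z(w)|}$, and $D(z,r)=\{w:d(z,w)<r\}$. Bergman tree with parameter $\lambda>0$: for $r>0$ let $S_r=\{z:d(0,z)=r\}$ and for $z\neq0$ let $P_rz$ be the point of $S_r$ on the ray $\{tz:t>0\}$. For each integer $N\ge1$ fix points $z^N_1,\dots,z^N_{J_N}\in S_{\lambda N}$ and a partition of $S_{\lambda N}$ into Borel sets $Q^N_1,\dots,Q^N_{J_N}$ with $B_N(z^N_j,\lambda/2)\subseteq Q^N_j\subseteq B_N(z^N_j,2\lambda)$, where $B_N(z,s)=S_{\lambda N}\cap D(z,s)$. Set $K^N_j=\{z:\lambda N\le d(0,z)<\lambda(N+1),\ P_{\lambda N}z\in Q^N_j\}$ with center $c^N_j=P_{\lambda(N+1/2)}z^N_j$; the root is $K_o=\{z:d(0,z)<\lambda\}$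 with center $0$. $\mathcal{T}_n$ is the index set consisting of $o$ and all pairs $\alpha=(N,j)$; write $K_\alpha$, $c_\alpha$ and $d(\alpha)=N$ (with $d(o)=0$). Tree structure: $(N+1,i)$ is a child of $(N,j)$ (for $N\ge1$) if $P_{\lambda N}c^{N+1}_i\in Q^N_j$, and every $(1,j)$ is a child of $o$. Write $\beta\ge\alpha$ if $\beta$ equals $\alpha$ or is a descendant of $\alpha$. *)

(* Defs.v *)
From Stdlib Require Import Reals Lra Relations ClassicalEpsilon.
Open Scope R_scope.

Definition C := (R * R)%type.
Definition C0 : C := (0, 0).
Definition C1 : C := (1, 0).
Definition Cadd (a b : C) : C := (fst a + fst b, snd a + snd b).
Definition Copp (a : C) : C := (- fst a, - snd a).
Definition Csub (a b : C) : C := Cadd a (Copp b).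
Definition Cmul (a b : C) : C :=
  (fst a * fst b - snd a * snd b, fst a * snd b + snd a * fst b).
Definition Cconj (a : C) : C := (fst a, - snd a).
Definition Cinv (a : C) : C :=
  (fst a / (fst a ^ 2 + snd a ^ 2), - snd a / (fst a ^ 2 + snd a ^ 2)).
Definition CofR (r : R) : C := (r, 0).
Definition Cmod (a : C) : R := sqrt (fst a ^ 2 + snd a ^ 2).

Fixpoint Csum (n : nat) (f : nat -> C) : C :=
  match n with O => C0 | S m => Cadd (Csum m f) (f m) end.

(* ---------- Vectors of C^n: coordinates 0..n-1 of a map nat -> C ---------- *)
Definition Vec := nat -> C.
Definition vzero : Vec := fun _ => C0.
Definition vadd (u v : Vec) : Vec := fun j => Cadd (u j) (v j).
Definition vsub (u v : Vec) : Vec := fun j => Csub (u j) (v j).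
Definition vscale (c : C) (v : Vec) : Vec := fun j => Cmul c (v j).
Definition vscalR (t : R) (v : Vec) : Vec := vscale (CofR t) v.

Definition inner (n : nat) (z w : Vec) : C :=
  Csum n (fun j => Cmul (z j) (Cconj (w j))).
Definition vnorm (n : nat) (z : Vec) : R := sqrt (fst (inner n z z)).
Definition inBall (n : nat) (z : Vec) : Prop := vnorm n z < 1.

(* Involutive automorphism phi_a (Rudin): P_a z = (z.a / a.a) a,
   Q_a = I - P_a, s_a = sqrt(1-|a|^2),
   phi_a(z) = (a - P_a z - s_a Q_a z) / (1 - z.a);  phi_0 = -id. *)
Definition phi (n : nat) (a z : Vec) : Vec :=
  if Req_EM_T (vnorm n a) 0 then vscale (Copp C1) z
  else
    let Pz := vscale (Cmul (inner n z a) (Cinv (inner n a a))) a in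
    vscale (Cinv (Csub C1 (inner n z a)))
      (vsub (vsub a Pz) (vscalR (sqrt (1 - vnorm n a ^ 2)) (vsub z Pz))).

Definition bdist (n : nat) (z w : Vec) : R :=
  / 2 * ln ((1 + vnorm n (phi n z w)) / (1 - vnorm n (phi n z w))).

Definition sphere (n : nat) (r : R) (z : Vec) : Prop :=
  inBall n z /\ bdist n vzero z = r.

Definition Pr (n : nat) (r : R) (z : Vec) : Vec :=
  epsilon (inhabits vzero)
    (fun p => sphere n r p /\ exists t, 0 < t /\ p = vscalR t z).

Record BergmanTree (n : nat) := {
  lam : R;
  J : nat -> nat;
  zc : nat -> nat -> Vec;
  Qs : nat -> nat -> Vec -> Prop;
  lam_pos : 0 < lam;
  zc_sphere : forall N j, (1 <= N)%nat -> (j < J N)%nat ->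
      sphere n (lam * INR N) (zc N j);
  Q_partition : forall N, (1 <= N)%nat -> forall w,
      sphere n (lam * INR N) w -> exists! j, (j < J N)%nat /\ Qs N j w;
  Q_lower : forall N j, (1 <= N)%nat -> (j < J N)%nat -> forall w,
      sphere n (lam * INR N) w -> bdist n (zc N j) w < lam / 2 -> Qs N j w;
  Q_upper : forall N j, (1 <= N)%nat -> (j < J N)%nat -> forall w,
      Qs N j w -> sphere n (lam * INR N) w /\ bdist n (zc N j) w < 2 * lam
}.
Arguments lam {n}. Arguments J {n}. Arguments zc {n}. Arguments Qs {n}.

Inductive node := Root | Nd (N j : nat).

Definition valid {n} (T : BergmanTree n) (a : node) : Prop :=
  match a with Root => True | Nd N j => (1 <= N)%nat /\ (j < J T N)%nat end.

Definition center {n} (T : BergmanTree n) (a : node) : Vec :=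
  match a with
  | Root => vzero
  | Nd N j => Pr n (lam T * (INR N + / 2)) (zc T N j)
  end.

Definition Kbox {n} (T : BergmanTree n) (a : node) (z : Vec) : Prop :=
  match a with
  | Root => inBall n z /\ bdist n vzero z < lam T
  | Nd N j => inBall n z /\ lam T * INR N <= bdist n vzero z
              /\ bdist n vzero z < lam T * (INR N + 1)
              /\ Qs T N j (Pr n (lam T * INR N) z)
  end.

Definition child {n} (T : BergmanTree n) (b a : node) : Prop :=
  valid T a /\ valid T b /\
  match a, b with
  | Root, Nd N _ => N = 1%nat
  | Nd N j, Nd N' i => N' = S N /\ Qs T N j (Pr n (lam T * INR N) (center T b))
  | _, _ => False
  end.

Definition desc {n} (T : BergmanTree n) (a b : node) : Prop :=
  clos_refl_trans node (fun x y => child T y x) a b.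

Definition Vreg (n : nat) (rho : R) (z w : Vec) : Prop :=
  inBall n w /\
  Cmod (Csub C1 (inner n w (vscalR (/ vnorm n z) z)))
    <= rho * (1 - vnorm n z).

(* Main.v *)
Require Import Defs.
From Stdlib Require Import Reals Relations Lra Psatz FunctionalExtensionality ClassicalEpsilon.
Open Scope R_scope.
Notation CC := Defs.C.

Lemma inner_lin n (al be ga de : CC) (a w b x : Vec) :
  inner n (fun j => Cadd (Cmul al (a j)) (Cmul be (w j)))
          (fun j => Cadd (Cmul ga (b j)) (Cmul de (x j)))
  = Cadd (Cadd (Cmul (Cmul al (Cconj ga)) (inner n a b)) (Cmul (Cmul al (Cconj de)) (inner n a x)))
         (Cadd (Cmul (Cmul be (Cconj ga)) (inner n w b)) (Cmul (Cmul be (Cconj de)) (inner n w x))).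
Proof.
  unfold inner. induction n as [|n IH]; simpl.
  - destruct al, be, ga, de. unfold C0, Cadd, Cmul, Cconj; simpl. f_equal; ring.
  - rewrite IH. destruct (Csum n (fun j => Cmul (a j) (Cconj (b j)))).
    destruct (Csum n (fun j => Cmul (a j) (Cconj (x j)))).
    destruct (Csum n (fun j => Cmul (w j) (Cconj (b j)))).
    destruct (Csum n (fun j => Cmul (w j) (Cconj (x j)))).
    destruct (a n), (w n), (b n), (x n), al, be, ga, de.
    unfold Cadd, Cmul, Cconj; simpl. f_equal; ring.
Qed.

Lemma inner_scale n (al ga : CC) (a b : Vec) :
  inner n (vscale al a) (vscale ga b) = Cmul (Cmul al (Cconj ga)) (inner n a b).
Proof.
  unfold inner, vscale. induction n as [|n IH]; simpl.
  - destruct al, ga. unfold C0, Cmul, Cconj; simpl. f_equal; ring.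
  - rewrite IH. destruct (Csum n (fun j => Cmul (a j) (Cconj (b j)))).
    destruct (a n), (b n), al, ga.
    unfold Cadd, Cmul, Cconj; simpl. f_equal; ring.
Qed.

Lemma inner_conj n u v : inner n v u = Cconj (inner n u v).
Proof.
  unfold inner. induction n as [|n IH]; simpl.
  - unfold C0, Cconj; simpl. f_equal; ring.
  - rewrite IH. destruct (Csum n (fun j => Cmul (u j) (Cconj (v j)))).
    destruct (u n), (v n). unfold Cadd, Cmul, Cconj; simpl. f_equal; ring.
Qed.

Lemma inner_self_snd n u : snd (inner n u u) = 0.
Proof.
  unfold inner. induction n as [|n IH]; simpl. reflexivity.
  destruct (Csum n (fun j => Cmul (u j) (Cconj (u j)))) as [s1 s2]. simpl in IH.
  destruct (u n). unfold Cadd, Cmul, Cconj; simpl. rewrite IH. ring.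
Qed.

Lemma inner_self_nonneg n u : 0 <= fst (inner n u u).
Proof.
  unfold inner. induction n as [|n IH]; simpl. lra.
  destruct (Csum n (fun j => Cmul (u j) (Cconj (u j)))) as [s1 s2]. simpl in IH.
  destruct (u n). unfold Cadd, Cmul, Cconj; simpl. nra.
Qed.

Lemma inner_self n u : inner n u u = (fst (inner n u u), 0).
Proof. rewrite <- (inner_self_snd n u). destruct (inner n u u); reflexivity. Qed.

Lemma vnorm_sq n u : vnorm n u ^ 2 = fst (inner n u u).
Proof. unfold vnorm. rewrite pow2_sqrt; auto using inner_self_nonneg. Qed.

Lemma vnorm_nonneg n u : 0 <= vnorm n u.
Proof. apply sqrt_pos. Qed.

Lemma Cmod_nonneg a : 0 <= Cmod a.
Proof. apply sqrt_pos. Qed.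
Lemma Cmod_sq a : Cmod a ^ 2 = fst a ^ 2 + snd a ^ 2.
Proof. unfold Cmod. rewrite pow2_sqrt; nra. Qed.
Lemma Cmod_le a y : 0 <= y -> fst a ^ 2 + snd a ^ 2 <= y ^ 2 -> Cmod a <= y.
Proof.
  intros Hy H. unfold Cmod. rewrite <- (sqrt_pow2 y Hy). apply sqrt_le_1; nra.
Qed.
Lemma Cmod_ge a y : 0 <= y -> y ^ 2 <= fst a ^ 2 + snd a ^ 2 -> y <= Cmod a.
Proof.
  intros Hy H. unfold Cmod. rewrite <- (sqrt_pow2 y Hy). apply sqrt_le_1; nra.
Qed.
Lemma sq_le_abs x y : 0 <= y -> x ^ 2 <= y ^ 2 -> x <= y.
Proof. intros. nra. Qed.

Lemma Cmod_triangle a b : Cmod (Cadd a b) <= Cmod a + Cmod b.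
Proof.
  apply Cmod_le. pose proof (Cmod_nonneg a); pose proof (Cmod_nonneg b); lra.
  destruct a as [a1 a2], b as [b1 b2]. unfold Cadd; simpl.
  pose proof (Cmod_sq (a1,a2)) as Ha; pose proof (Cmod_sq (b1,b2)) as Hb; cbn [fst snd] in *.
  pose proof (Cmod_nonneg (a1,a2)); pose proof (Cmod_nonneg (b1,b2)).
  set (ma := Cmod (a1,a2)) in *; set (mb := Cmod (b1,b2)) in *.
  assert (a1*b1 + a2*b2 <= ma*mb).
  { apply sq_le_abs. nra. replace ((ma*mb)^2) with (ma^2*mb^2) by ring. rewrite Ha, Hb. replace ((a1^2+a2^2)*(b1^2+b2^2)) with ((a1*b1+a2*b2)^2 + (a1*b2-a2*b1)^2) by ring. assert (0 <= (a1*b2-a2*b1)^2) by apply pow2_ge_0. lra. }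
  nra.
Qed.

Lemma cauchy_schwarz n u v :
  fst (inner n u v) ^ 2 + snd (inner n u v) ^ 2 <= fst (inner n u u) * fst (inner n v v).
Proof.
  assert (Hq : forall t : R, 0 <= fst (inner n u u) - 2 * t * (fst (inner n u v) ^ 2 + snd (inner n u v) ^ 2)
                        + t^2 * (fst (inner n u v) ^ 2 + snd (inner n u v) ^ 2) * fst (inner n v v)).
  { intro t.
    pose proof (inner_self_nonneg n (fun j => Cadd (Cmul Defs.C1 (u j)) (Cmul (-(t*fst (inner n u v)), -(t * snd (inner n u v))) (v j)))) as H.
    rewrite inner_lin in H. rewrite (inner_conj n u v) in H.
    rewrite (inner_self n u), (inner_self n v) in H.
    destruct (inner n u v) as [p1 p2]. simpl in *.
    unfold Cadd, Cmul, Cconj, Defs.C1 in H; simpl in H. nra. }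
  pose proof (inner_self_nonneg n u); pose proof (inner_self_nonneg n v).
  set (A := fst (inner n u u)) in *; set (B := fst (inner n v v)) in *.
  set (P := fst (inner n u v) ^ 2 + snd (inner n u v) ^ 2) in *.
  assert (HP : 0 <= P) by (unfold P; nra).
  destruct (Req_dec P 0) as [HP0|HP0]. rewrite HP0; nra.
  destruct (Req_dec B 0) as [HB|HB].
  - specialize (Hq ((A+1)/(2*P))). rewrite HB in Hq.
    replace (A - 2 * ((A + 1) / (2 * P)) * P + ((A + 1) / (2 * P)) ^ 2 * P * 0) with (-1) in Hq by (field; lra). lra.
  - specialize (Hq (1/B)). assert (0 < B) by lra.
    assert (0 <= A - P / B) by (replace (A - P/B) with (A - 2 * (1/B) * P + (1/B)^2 * P * B) by (field; lra); lra).
    apply Rmult_le_reg_r with (/B). apply Rinv_0_lt_compat; lra.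
    replace (A * B * /B) with A by (field; lra). unfold Rdiv in *. lra.
Qed.

Definition Dk n u v := Cmod (Csub Defs.C1 (inner n u v)).

Lemma Dk_sym n u v : Dk n u v = Dk n v u.
Proof.
  unfold Dk. rewrite (inner_conj n u v). destruct (inner n u v) as [x1 x2].
  unfold Cmod, Csub, Cadd, Copp, Cconj, Defs.C1; simpl. f_equal. ring.
Qed.

Lemma Dk_nonneg n u v : 0 <= Dk n u v.
Proof. apply Cmod_nonneg. Qed.

Lemma koranyi n z e x :
  fst (inner n z z) = 1 -> fst (inner n e e) = 1 -> fst (inner n x x) = 1 ->
  sqrt (Dk n z x) <= sqrt (Dk n z e) + sqrt (Dk n e x).
Proof.
  intros Hz He Hx.
  set (d1 := fun j => Cadd (Cmul Defs.C1 (z j)) (Cmul (-1,0) (e j))).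
  set (d2 := fun j => Cadd (Cmul Defs.C1 (e j)) (Cmul (-1,0) (x j))).
  pose proof (cauchy_schwarz n d1 d2) as CS.
  pose proof (inner_self_nonneg n d1) as N1.
  pose proof (inner_self_nonneg n d2) as N2.
  unfold d1, d2 in *. repeat rewrite inner_lin in CS. rewrite inner_lin in N1. rewrite inner_lin in N2.
  rewrite (inner_conj n z e) in CS, N1. rewrite (inner_conj n e x) in CS, N2.
  rewrite (inner_self n e) in CS, N1, N2. rewrite (inner_self n z) in N1. rewrite (inner_self n x) in N2.
  rewrite He in CS, N1, N2. rewrite Hz in N1. rewrite Hx in N2.
  unfold Dk.
  destruct (inner n z e) as [x1 x2]. destruct (inner n e x) as [y1 y2]. destruct (inner n z x) as [z1 z2].
  unfold Cadd, Cmul, Cconj, Defs.C1 in CS, N1, N2; cbn [fst snd] in CS, N1, N2.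
  set (a := Cmod (Csub Defs.C1 (x1, x2))). set (b := Cmod (Csub Defs.C1 (y1, y2))).
  assert (Ha0 : 0 <= a) by apply Cmod_nonneg. assert (Hb0 : 0 <= b) by apply Cmod_nonneg.
  assert (Ha : 1 - x1 <= a).
  { apply Cmod_ge. nra. unfold Csub, Cadd, Copp, Defs.C1; cbn [fst snd]. nra. }
  assert (Hb : 1 - y1 <= b).
  { apply Cmod_ge. nra. unfold Csub, Cadd, Copp, Defs.C1; cbn [fst snd]. nra. }
  set (m := Cmod (x1 - z1 - 1 + y1, x2 - z2 + y2)).
  assert (Hm0 : 0 <= m) by apply Cmod_nonneg.
  pose proof (sqrt_pos a) as sa. pose proof (sqrt_pos b) as sb.
  pose proof (sqrt_sqrt a Ha0) as sa2. pose proof (sqrt_sqrt b Hb0) as sb2.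
  assert (Hm : m <= 2 * sqrt a * sqrt b).
  { unfold m. apply Cmod_le. nra. cbn [fst snd].
    replace ((2 * sqrt a * sqrt b)^2) with (4 * (sqrt a * sqrt a) * (sqrt b * sqrt b)) by ring.
    rewrite sa2, sb2. nra. }
  assert (Ht : Cmod (Csub Defs.C1 (z1, z2)) <= a + b + m).
  { replace (Csub Defs.C1 (z1, z2)) with
      (Cadd (Cadd (Csub Defs.C1 (x1, x2)) (Csub Defs.C1 (y1, y2))) (x1 - z1 - 1 + y1, x2 - z2 + y2)).
    2:{ unfold Csub, Cadd, Copp, Defs.C1; cbn [fst snd]. f_equal; ring. }
    eapply Rle_trans. apply Cmod_triangle. pose proof (Cmod_triangle (Csub Defs.C1 (x1, x2)) (Csub Defs.C1 (y1, y2))).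
    change (Cmod (Csub Defs.C1 (x1, x2))) with a in H. change (Cmod (Csub Defs.C1 (y1, y2))) with b in H. change (Cmod (x1 - z1 - 1 + y1, x2 - z2 + y2)) with m. lra. }
  rewrite <- (sqrt_pow2 (sqrt a + sqrt b)) by lra.
  apply sqrt_le_1. apply Cmod_nonneg. nra.
  replace ((sqrt a + sqrt b)^2) with (sqrt a * sqrt a + sqrt b * sqrt b + 2 * sqrt a * sqrt b) by ring.
  rewrite sa2, sb2. lra.
Qed.

Lemma vnorm_scale n c v : vnorm n (vscale c v) = Cmod c * vnorm n v.
Proof.
  unfold vnorm. rewrite inner_scale. rewrite (inner_self n v).
  pose proof (inner_self_nonneg n v).
  destruct c as [c1 c2]. unfold Cmul, Cconj, Cmod; cbn [fst snd].
  rewrite <- sqrt_mult by nra. f_equal. ring.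
Qed.

Lemma vnorm_scalR n t v : 0 <= t -> vnorm n (vscalR t v) = t * vnorm n v.
Proof.
  intro Ht. unfold vscalR. rewrite vnorm_scale. f_equal. unfold Cmod, CofR; cbn [fst snd].
  replace (t^2 + 0^2) with (t^2) by ring. apply sqrt_pow2; auto.
Qed.

Lemma vnorm_vzero n : vnorm n vzero = 0.
Proof.
  unfold vnorm. replace (fst (inner n vzero vzero)) with 0. apply sqrt_0.
  unfold inner, vzero. induction n; simpl. reflexivity.
  unfold Cadd, Cmul, Cconj, C0 in *; simpl in *. rewrite <- IHn. ring.
Qed.

Lemma bdist0 n z : bdist n vzero z = / 2 * ln ((1 + vnorm n z) / (1 - vnorm n z)).
Proof.
  unfold bdist, phi. destruct (Req_EM_T (vnorm n vzero) 0) as [_|Hc].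
  - rewrite vnorm_scale. replace (Cmod (Copp Defs.C1)) with 1. rewrite Rmult_1_l. reflexivity.
    unfold Cmod, Copp, Defs.C1; cbn [fst snd]. match goal with |- _ = sqrt ?e => replace e with 1 by ring end. symmetry; apply sqrt_1.
  - exfalso. apply Hc. apply vnorm_vzero.
Qed.

Lemma exp_art x : 0 <= x < 1 -> exp (2 * (/ 2 * ln ((1 + x) / (1 - x)))) = (1 + x) / (1 - x).
Proof.
  intros H. replace (2 * (/2 * ln ((1 + x) / (1 - x)))) with (ln ((1 + x) / (1 - x))) by field.
  apply exp_ln. apply Rdiv_lt_0_compat; lra.
Qed.

Lemma art_ge1 x : 0 <= x < 1 -> 1 <= (1 + x) / (1 - x).
Proof. intros H. apply (Rmult_le_reg_r (1 - x)). lra. unfold Rdiv. rewrite Rmult_assoc, Rinv_l by lra. lra. Qed.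

Lemma norm_of_bdist n z : inBall n z ->
  1 <= exp (2 * bdist n vzero z) /\
  vnorm n z = (exp (2 * bdist n vzero z) - 1) / (exp (2 * bdist n vzero z) + 1).
Proof.
  intro Hb. unfold inBall in Hb. pose proof (vnorm_nonneg n z).
  rewrite bdist0. rewrite exp_art by lra. split. apply art_ge1; lra.
  field. split; lra. 
Qed.

Lemma Pr_spec n r v : 0 < r -> 0 < vnorm n v ->
  sphere n r (Pr n r v) /\ exists t, 0 < t /\ Pr n r v = vscalR t v.
Proof.
  intros Hr Hv. unfold Pr. apply epsilon_spec.
  set (E := exp (2 * r)).
  assert (HE : 1 < E) by (unfold E; rewrite <- exp_0; apply exp_increasing; lra).
  set (x := (E - 1) / (E + 1)).
  assert (Hx : 0 < x < 1).
  { unfold x. split. apply Rdiv_lt_0_compat; lra.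
    apply (Rmult_lt_reg_r (E+1)). lra. unfold Rdiv. rewrite Rmult_assoc, Rinv_l by lra. lra. }
  exists (vscalR (x / vnorm n v) v). split.
  - assert (Hn : vnorm n (vscalR (x / vnorm n v) v) = x).
    { rewrite vnorm_scalR. field. lra. apply Rlt_le, Rdiv_lt_0_compat; lra. }
    unfold sphere, inBall. rewrite Hn. split. lra.
    rewrite bdist0, Hn.
    replace ((1 + x) / (1 - x)) with E.
    unfold E. rewrite ln_exp. field.
    unfold x. field. lra.
  - exists (x / vnorm n v). split; auto. apply Rdiv_lt_0_compat; lra.
Qed.

Lemma sphere_norm n r z : sphere n r z -> vnorm n z = (exp (2 * r) - 1) / (exp (2 * r) + 1).
Proof.
  intros [Hb Hd]. destruct (norm_of_bdist n z Hb) as [_ H]. rewrite Hd in H. exact H.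
Qed.

Definition dir n v := vscalR (/ vnorm n v) v.

Lemma dir_unit n v : 0 < vnorm n v -> fst (inner n (dir n v) (dir n v)) = 1.
Proof.
  intro Hv. rewrite <- vnorm_sq. unfold dir. rewrite vnorm_scalR.
  field. lra. apply Rlt_le, Rinv_0_lt_compat; auto.
Qed.

Lemma dir_scale n t v : 0 < t -> 0 < vnorm n v -> dir n (vscalR t v) = dir n v.
Proof.
  intros Ht Hv. unfold dir. rewrite vnorm_scalR by lra.
  apply functional_extensionality; intro j. unfold vscalR, vscale, CofR.
  destruct (v j). unfold Cmul; cbn [fst snd]. f_equal; field; lra.
Qed.

Lemma inner_scalR n s t u v :
  inner n (vscalR s u) (vscalR t v) = (s * t * fst (inner n u v), s * t * snd (inner n u v)).
Proof.
  unfold vscalR. rewrite inner_scale. destruct (inner n u v). unfold Cmul, Cconj, CofR; cbn [fst snd].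
  f_equal; ring.
Qed.

Lemma phi_identity n a w : 0 < vnorm n a -> vnorm n a < 1 ->
  (1 - fst (inner n w a))^2 + (snd (inner n w a))^2 <> 0 ->
  vnorm n (phi n a w) ^2 * ((1 - fst (inner n w a))^2 + (snd (inner n w a))^2)
  = ((1 - fst (inner n w a))^2 + (snd (inner n w a))^2) - (1 - vnorm n a ^2) * (1 - vnorm n w ^2).
Proof.
  intros Ha0 Ha1 HD. unfold phi. destruct (Req_EM_T (vnorm n a) 0) as [e|_]. lra.
  set (c := Cinv (Csub Defs.C1 (inner n w a))).
  set (k := Cmul (inner n w a) (Cinv (inner n a a))).
  remember (sqrt (1 - vnorm n a ^ 2)) as s eqn:Hs.
  set (al := Cmul c (Cadd (Csub Defs.C1 k) (Cmul (s,0) k))).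
  set (be := Cmul c (- s, 0)).
  assert (Hf : vscale c (vsub (vsub a (vscale k a)) (vscalR s (vsub w (vscale k a))))
               = fun j => Cadd (Cmul al (a j)) (Cmul be (w j))).
  { apply functional_extensionality; intro j. unfold al, be, vscale, vsub, vscalR, vscale, CofR.
    destruct (a j), (w j), c, k. unfold Cmul, Csub, Cadd, Copp, Defs.C1; cbn [fst snd]. f_equal; ring. }
  rewrite Hf. rewrite vnorm_sq. rewrite inner_lin.
  unfold al, be, c, k. clear al be c k Hf.
  rewrite (vnorm_sq n w). rewrite (inner_conj n w a).
  rewrite (inner_self n a), (inner_self n w).
  rewrite <- (vnorm_sq n a) in *. rewrite <- (vnorm_sq n w).
  assert (HA : vnorm n a ^ 2 = 1 - s * s).
  { rewrite Hs. rewrite sqrt_sqrt. ring. nra. }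
  assert (Hs1 : 1 - s * s <> 0) by (rewrite <- HA; nra).
  clear Hs. rewrite HA in *.
  destruct (inner n w a) as [p1 p2]. cbn [fst snd] in *.
  set (W := vnorm n w ^ 2).
  unfold Cinv, Cmul, Csub, Cadd, Copp, Cconj, Defs.C1; cbn [fst snd].
  field. split; auto. replace ((1 + - p1) ^ 2 + (- p2) ^ 2) with ((1 - p1) ^ 2 + p2 ^ 2) by ring. auto.
Qed.

Lemma inner_scalR_l n t u v :
  inner n (vscalR t u) v = (t * fst (inner n u v), t * snd (inner n u v)).
Proof.
  unfold inner, vscalR, vscale, CofR. induction n as [|n IH]; simpl.
  - unfold C0; f_equal; ring.
  - rewrite IH. destruct (Csum n (fun j => Cmul (u j) (Cconj (v j)))).
    destruct (u n), (v n). unfold Cadd, Cmul, Cconj; simpl. f_equal; ring.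
Qed.

Lemma tanh_facts E : 1 < E ->
  let x := (E - 1) / (E + 1) in 0 < x < 1 /\ 1 - x^2 = 4 * E / (E + 1)^2 /\ x^2 = (E-1)^2/(E+1)^2.
Proof.
  intros HE x. unfold x. repeat split.
  - apply Rdiv_lt_0_compat; lra.
  - apply (Rmult_lt_reg_r (E+1)). lra. unfold Rdiv. rewrite Rmult_assoc, Rinv_l by lra. lra.
  - field. lra.
  - field. lra.
Qed.

Lemma real_div_lemma x u p2 m : 0 < x < 1 -> u^2 + p2^2 <= m^2 -> 0 <= m ->
  (1 - (1 - u)/x^2)^2 + (- (p2/x^2))^2 <= ((m + (1 - x^2))/x^2)^2.
Proof.
  intros Hx Hu Hm. set (d := 1 - x^2).
  assert (Hd : 0 <= d) by (unfold d; nra).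
  assert (Hx2 : 0 < x^2) by nra.
  replace ((1 - (1 - u)/x^2)^2 + (- (p2/x^2))^2) with (((u - d)^2 + p2^2) / (x^2)^2) by (unfold d; field; lra).
  replace (((m + d)/x^2)^2) with ((m + d)^2 / (x^2)^2) by (unfold d; field; lra).
  unfold Rdiv. apply Rmult_le_compat_r. apply Rlt_le, Rinv_0_lt_compat; nra.
  assert (-u <= m) by nra. nra.
Qed.

Definition Kc (l : R) : R :=
  let E4 := exp (4 * l) in let tau := (E4 - 1) / (E4 + 1) in
  let E1 := exp (2 * l) in
  (/ (1 - tau^2) + 1) * 4 * (E1 / (E1 - 1))^2.

Lemma ratio_mono E E1 : 1 < E1 -> E1 <= E -> E / (E - 1) <= E1 / (E1 - 1).
Proof.
  intros H1 H2. apply (Rmult_le_reg_r ((E - 1) * (E1 - 1))). nra.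
  replace (E / (E - 1) * ((E - 1) * (E1 - 1))) with (E * (E1 - 1)) by (field; lra).
  replace (E1 / (E1 - 1) * ((E - 1) * (E1 - 1))) with (E1 * (E - 1)) by (field; lra). nra.
Qed.

Lemma exp_gt1 a : 0 < a -> 1 < exp a.
Proof. intro. rewrite <- exp_0. apply exp_increasing. lra. Qed.

Lemma exp_le_mono a b : a <= b -> exp a <= exp b.
Proof. intros [H|H]. left; apply exp_increasing; auto. subst; lra. Qed.

Lemma step n (T : BergmanTree n) N j v :
  (1 <= N)%nat -> (j < J T N)%nat -> 0 < vnorm n v -> Qs T N j (Pr n (lam T * INR N) v) ->
  Dk n (dir n v) (dir n (zc T N j)) <= Kc (lam T) * / exp (2 * (lam T * INR N)).
Proof.
  intros H1 Hj Hv HQ.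
  pose proof (lam_pos n T) as Hl. set (l := lam T) in *.
  assert (HN : 1 <= INR N) by (apply (le_INR 1); auto).
  set (r := l * INR N) in *.
  assert (Hr : l <= r) by (unfold r; nra).
  destruct (Pr_spec n r v ltac:(lra) Hv) as [Hsy [t [Ht Hy]]].
  destruct (Q_upper n T N j H1 Hj _ HQ) as [_ Hd].
  pose proof (zc_sphere n T N j H1 Hj) as Hsz. fold l r in Hsz.
  set (y := Pr n r v) in *. set (z := zc T N j) in *.
  set (E := exp (2 * r)).
  set (E1 := exp (2 * l)).
  assert (HE1 : 1 < E1) by (apply exp_gt1; lra).
  assert (HEE1 : E1 <= E) by (apply exp_le_mono; lra).
  set (E4 := exp (4 * l)).
  assert (HE4 : 1 < E4) by (apply exp_gt1; lra).
  set (tau := (E4 - 1) / (E4 + 1)).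
  destruct (tanh_facts E4 HE4) as [Htau [_ _]]. fold tau in Htau.
  set (Mc := / (1 - tau^2)).
  assert (HMc1 : Mc * (1 - tau^2) = 1) by (unfold Mc; field; nra).
  assert (HMc : 1 <= Mc).
  { unfold Mc. rewrite <- Rinv_1. apply Rinv_le_contravar; nra. }
  destruct (tanh_facts E ltac:(lra)) as [Hx [Hx1 Hx2]].
  set (x := (E - 1) / (E + 1)) in *.
  assert (Hny : vnorm n y = x) by (apply (sphere_norm n r y Hsy)).
  assert (Hnz : vnorm n z = x) by (apply (sphere_norm n r z Hsz)).
  assert (Htv : t * vnorm n v = x) by (rewrite <- Hny, Hy, vnorm_scalR; lra).
  assert (HA : Cmod (Csub Defs.C1 (inner n y z)) <= Mc * (1 - x^2)).
  { apply Cmod_le. apply Rmult_le_pos; nra.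
    set (p1 := fst (inner n y z)). set (p2 := snd (inner n y z)).
    replace (fst (Csub Defs.C1 (inner n y z)) ^ 2 + snd (Csub Defs.C1 (inner n y z)) ^ 2)
      with ((1 - p1)^2 + p2^2) by (unfold Csub, Cadd, Copp, Defs.C1; cbn [fst snd]; unfold p1, p2; ring).
    set (D := (1 - p1)^2 + p2^2).
    assert (HD0 : 0 <= D) by (unfold D; apply Rplus_le_le_0_compat; apply pow2_ge_0).
    destruct (Req_dec D 0) as [HD|HD].
    - rewrite HD. apply pow2_ge_0.
    - pose proof (phi_identity n z y ltac:(lra) ltac:(lra) HD) as Hid. fold p1 p2 D in Hid.
      rewrite Hnz, Hny in Hid.
      set (f := vnorm n (phi n z y)) in *.
      assert (Hf0 : 0 <= f) by apply vnorm_nonneg.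
      assert (HDp : 0 < D) by (destruct HD0; auto; exfalso; auto).
      assert (Hxx : 0 < 1 - x^2) by nra.
      assert (Hf1 : f < 1).
      { assert (f^2 < 1). { apply (Rmult_lt_reg_r D). lra. rewrite Hid.
          assert (0 < (1 - x^2) * (1 - x^2)) by (apply Rmult_lt_0_compat; lra). lra. } nra. }
      assert (Hft : f < tau).
      { unfold bdist in Hd. fold f in Hd. change (lam T) with l in Hd.
        assert (exp (2 * (/ 2 * ln ((1 + f) / (1 - f)))) < E4) by (apply exp_increasing; lra).
        rewrite exp_art in H by lra.
        assert (1 + f < E4 * (1 - f)).
        { apply (Rmult_lt_reg_r (/ (1 - f))). apply Rinv_0_lt_compat; lra.
          replace (E4 * (1 - f) * / (1 - f)) with E4 by (field; lra). exact H. }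
        unfold tau. apply (Rmult_lt_reg_r (E4 + 1)). lra.
        replace ((E4 - 1) / (E4 + 1) * (E4 + 1)) with (E4 - 1) by (field; lra). lra. }
      assert (HDt : D * (1 - tau^2) <= (1 - x^2)^2).
      { assert (f^2 <= tau^2) by nra. nra. }
      assert (D <= Mc * (1 - x^2)^2).
      { replace D with (Mc * (D * (1 - tau^2))) by (transitivity (D * (Mc * (1 - tau^2))); [ring | rewrite HMc1; ring]).
        apply Rmult_le_compat_l. nra. exact HDt. }
      nra. }
  unfold Dk.
  assert (Hdz : dir n z = vscalR (/ x) z) by (unfold dir; rewrite Hnz; reflexivity).
  rewrite Hdz. unfold dir. rewrite inner_scalR.
  rewrite Hy, inner_scalR_l in HA.
  set (q1 := fst (inner n v z)) in *. set (q2 := snd (inner n v z)) in *.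
  assert (Hq1 : / vnorm n v * / x * q1 = (t * q1) / x^2) by (rewrite <- Htv; field; lra).
  assert (Hq2 : / vnorm n v * / x * q2 = (t * q2) / x^2) by (rewrite <- Htv; field; lra).
  rewrite Hq1, Hq2.
  apply Rle_trans with ((Mc * (1 - x^2) + (1 - x^2)) / x^2).
  - apply Cmod_le. assert (0 < 1 - x^2) by nra. apply Rlt_le, Rdiv_lt_0_compat. nra. nra.
    unfold Csub, Cadd, Copp, Defs.C1; cbn [fst snd].
    replace (1 + - (t * q1 / x ^ 2)) with (1 - (1 - (1 - t * q1)) / x^2) by (field; lra).
    replace (0 + - (t * q2 / x ^ 2)) with (- (t * q2 / x ^ 2)) by ring.
    apply real_div_lemma; [lra | | apply Rmult_le_pos; nra].
    pose proof (Cmod_sq (Csub Defs.C1 (t * q1, t * q2))) as Hs.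
    unfold Csub, Cadd, Copp, Defs.C1 in Hs; cbn [fst snd] in Hs.
    pose proof (Cmod_nonneg (Csub Defs.C1 (t * q1, t * q2))).
    unfold Csub, Cadd, Copp, Defs.C1 in HA, H; cbn [fst snd] in HA, H.
    replace ((1 - t*q1)^2 + (t*q2)^2) with ((1 + - (t * q1)) ^ 2 + (0 + - (t * q2)) ^ 2) by ring.
    rewrite <- Hs. nra.
  - replace ((Mc * (1 - x ^ 2) + (1 - x ^ 2)) / x ^ 2) with ((Mc + 1) * 4 * (E / (E - 1))^2 * / E)
      by (rewrite Hx1, Hx2; field; lra).
    unfold Kc; cbv zeta. fold E1 E4 tau Mc.

    apply Rmult_le_compat_r. apply Rlt_le, Rinv_0_lt_compat; lra.
    apply Rmult_le_compat_l. nra.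
    pose proof (ratio_mono E E1 HE1 HEE1).
    assert (0 <= E / (E - 1)) by (apply Rlt_le, Rdiv_lt_0_compat; lra). nra.
Qed.

Lemma e_sq y : exp (- y) ^ 2 = / exp (2 * y).
Proof.
  rewrite <- exp_Ropp. replace (exp (-y) ^ 2) with (exp (-y) * exp (-y)) by ring.
  rewrite <- exp_plus. f_equal. ring.
Qed.

Lemma Kc_pos l : 0 < l -> 0 < Kc l.
Proof.
  intro Hl. unfold Kc; cbv zeta.
  set (E4 := exp (4 * l)). assert (HE4 : 1 < E4) by (apply exp_gt1; lra).
  destruct (tanh_facts E4 HE4) as [Ht _].
  set (E1 := exp (2 * l)). assert (HE1 : 1 < E1) by (apply exp_gt1; lra).
  set (tau := (E4 - 1) / (E4 + 1)) in *.
  assert (0 < / (1 - tau^2)) by (apply Rinv_0_lt_compat; nra).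
  assert (0 < E1 / (E1 - 1)) by (apply Rdiv_lt_0_compat; lra).
  apply Rmult_lt_0_compat. lra. apply pow_lt. auto.
Qed.

Lemma sphere_pos n r z : 0 < r -> sphere n r z -> 0 < vnorm n z.
Proof.
  intros Hr Hs. rewrite (sphere_norm n r z Hs).
  assert (1 < exp (2 * r)) by (apply exp_gt1; lra).
  apply Rdiv_lt_0_compat; lra.
Qed.

Lemma Dk_self n u : fst (inner n u u) = 1 -> Dk n u u = 0.
Proof.
  intro H. unfold Dk. rewrite inner_self, H. unfold Cmod, Csub, Cadd, Copp, Defs.C1; cbn [fst snd].
  match goal with |- sqrt ?e = 0 => replace e with 0 by ring end. apply sqrt_0.
Qed.

Lemma sqrt_bound K y D : 0 < K -> 0 <= D -> D <= K * / exp (2 * y) -> sqrt D <= sqrt K * exp (- y).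
Proof.
  intros HK HD H. rewrite <- (sqrt_pow2 (sqrt K * exp (-y))).
  2:{ apply Rmult_le_pos. apply sqrt_pos. apply Rlt_le, exp_pos. }
  apply sqrt_le_1; auto. nra.
  replace ((sqrt K * exp (- y))^2) with ((sqrt K * sqrt K) * exp (-y) ^ 2) by ring.
  rewrite sqrt_sqrt, e_sq by lra. auto.
Qed.

Lemma chain n (T : BergmanTree n) N j :
  (1 <= N)%nat -> (j < J T N)%nat ->
  forall b, desc T (Nd N j) b ->
  exists M i, b = Nd M i /\ (1 <= M)%nat /\ (i < J T M)%nat /\
    sqrt (Dk n (dir n (zc T N j)) (dir n (zc T M i))) <=
      sqrt (Kc (lam T)) * (exp (- (lam T * INR N)) - exp (- (lam T * INR M))) / (1 - exp (- lam T)).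
Proof.
  intros H1 Hj b Hd. unfold desc in Hd. apply clos_rt_rtn1 in Hd.
  pose proof (lam_pos n T) as Hl.
  assert (Hq : exp (- lam T) < 1) by (rewrite <- exp_0; apply exp_increasing; lra).
  assert (HK := Kc_pos (lam T) Hl).
  assert (HsK : 0 < sqrt (Kc (lam T))) by (apply sqrt_lt_R0; auto).
  induction Hd as [|y z Hc Hd IH].
  - exists N, j. repeat split; auto.
    rewrite Dk_self. rewrite sqrt_0. replace (exp (- (lam T * INR N)) - exp (- (lam T * INR N))) with 0 by ring.
    unfold Rdiv. lra.
    apply dir_unit. apply (sphere_pos n (lam T * INR N)). apply Rmult_lt_0_compat; auto.
    apply lt_0_INR; lia. apply zc_sphere; auto.
  - destruct IH as [M [i [Hy [HM [Hi IH]]]]]. subst y.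
    destruct Hc as [_ [Hvz Hc]]. destruct z as [|M' i']. contradiction.
    destruct Hc as [HM' HQ]. subst M'. destruct Hvz as [HM1 Hi'].
    exists (S M), i'. repeat split; auto.
    set (c := center T (Nd (S M) i')) in HQ.
    assert (Hr : 0 < lam T * (INR (S M) + / 2)).
    { apply Rmult_lt_0_compat; auto. pose proof (pos_INR (S M)). lra. }
    assert (Hzp : 0 < vnorm n (zc T (S M) i')).
    { apply (sphere_pos n (lam T * INR (S M))). apply Rmult_lt_0_compat; auto. apply lt_0_INR; lia.
      apply zc_sphere; auto. }
    destruct (Pr_spec n _ _ Hr Hzp) as [Hsc [t [Ht Hct]]].
    assert (Hcp : 0 < vnorm n c) by (apply (sphere_pos n _ c Hr Hsc)).
    pose proof (step n T M i c HM Hi Hcp HQ) as Hst.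
    unfold c, center in Hst. rewrite Hct in Hst. rewrite dir_scale in Hst by auto.
    rewrite Dk_sym in Hst.
    assert (HzM : 0 < vnorm n (zc T M i)).
    { apply (sphere_pos n (lam T * INR M)). apply Rmult_lt_0_compat; auto. apply lt_0_INR; lia.
      apply zc_sphere; auto. }
    assert (HzN : 0 < vnorm n (zc T N j)).
    { apply (sphere_pos n (lam T * INR N)). apply Rmult_lt_0_compat; auto. apply lt_0_INR; lia.
      apply zc_sphere; auto. }
    pose proof (koranyi n (dir n (zc T N j)) (dir n (zc T M i)) (dir n (zc T (S M) i'))
                  (dir_unit n _ HzN) (dir_unit n _ HzM) (dir_unit n _ Hzp)) as Hk.
    pose proof (sqrt_bound _ _ _ HK (Dk_nonneg _ _ _) Hst) as Hs.
    assert (He : exp (- (lam T * INR (S M))) = exp (- (lam T * INR M)) * exp (- lam T)).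
    { rewrite <- exp_plus. f_equal. rewrite S_INR. ring. }
    rewrite He.
    set (eM := exp (- (lam T * INR M))) in *. set (eN := exp (- (lam T * INR N))) in *.
    set (q := exp (- lam T)) in *.
    apply Rle_trans with (sqrt (Kc (lam T)) * (eN - eM) / (1 - q) + sqrt (Kc (lam T)) * eM). lra.
    right. field. lra.
Qed.

Lemma final_ineq w1 X1 X2 b : 0 <= w1 <= 1 -> 0 <= b -> b ^ 2 = (1 + - X1)^2 + (0 + - X2)^2 ->
  (1 + - (w1 * X1)) ^ 2 + (0 + - (w1 * X2)) ^ 2 <= ((1 - w1) + b) ^ 2.
Proof.
  intros Hw Hb Hbb.
  assert (H0 : (1 - X1)^2 <= b^2) by (rewrite Hbb; nra).
  assert (H1 : 1 - X1 <= b) by nra.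
  replace ((1 + - (w1 * X1)) ^ 2 + (0 + - (w1 * X2)) ^ 2) with
    ((1 - w1)^2 + 2 * (1 - w1) * (w1 * (1 - X1)) + w1^2 * b^2) by (rewrite Hbb; ring).
  assert (w1 * (1 - X1) <= b) by (destruct (Rle_dec 0 (1 - X1)); nra).
  assert (Hw2 : w1^2 <= 1) by nra. assert (w1^2*b^2 <= 1*b^2) by (apply Rmult_le_compat_r; [apply pow2_ge_0|exact Hw2]). nra.
Qed.

Theorem lemma2p4 (n : nat) (T : BergmanTree n) :
  exists rho : R, 0 < rho /\
    forall alpha : node, valid T alpha -> alpha <> Root ->
      forall beta : node, desc T alpha beta ->
        forall w : Vec, Kbox T beta w -> Vreg n rho (center T alpha) w.
Proof.
  pose proof (lam_pos n T) as Hl. set (l := lam T) in *.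
  set (q := exp (- l)).
  assert (Hq1 : q < 1) by (unfold q; rewrite <- exp_0; apply exp_increasing; lra).
  assert (Hq0 : 0 < q) by apply exp_pos.
  set (K := Kc l). assert (HK : 0 < K) by (apply Kc_pos; auto).
  exists ((2 + K / (1 - q)^2) / q). split.
  { apply Rdiv_lt_0_compat; auto. assert (0 < K / (1-q)^2) by (apply Rdiv_lt_0_compat; nra). lra. }
  intros alpha Hva Hne beta Hd w Hw.
  destruct alpha as [|N j]. contradiction. destruct Hva as [H1 Hj].
  destruct (chain n T N j H1 Hj beta Hd) as [M [i [Hb [HM [Hi Hch]]]]]. subst beta.
  destruct Hw as [Hwb [HwM [_ HQ]]]. fold l in HwM, HQ, Hch.
  assert (HNM : (N <= M)%nat).
  { clear -Hd. unfold desc in Hd. apply clos_rt_rtn1 in Hd.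
    remember (Nd M i) as b eqn:Eb. revert M i Eb. induction Hd; intros M i Eb.
    - inversion Eb; lia.
    - subst z. destruct H as [Hy [_ Hc]]. destruct y as [|M' i']. 
      + (* y = Root: impossible since path from Nd never reaches Root *)
        exfalso. clear -Hd. remember Root as r eqn:Er. induction Hd. discriminate.
        subst z. destruct H as [_ [_ Hc]]. destruct y; contradiction.
      + destruct Hc as [HS _]. subst M. specialize (IHHd M' i' eq_refl). lia. }
  destruct (norm_of_bdist n w Hwb) as [HEw Hnw].
  set (Ew := exp (2 * bdist n vzero w)) in *.
  assert (HaN : 1 < exp (2 * (l * INR N))).
  { apply exp_gt1. assert (1 <= INR N) by (apply (le_INR 1); auto). nra. }
  assert (HEwN : exp (2 * (l * INR N)) <= Ew).
  { apply exp_le_mono. assert (INR N <= INR M) by (apply le_INR; auto). nra. }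
  assert (Hwp : 0 < vnorm n w) by (rewrite Hnw; apply Rdiv_lt_0_compat; lra).
  assert (Hw1 : vnorm n w < 1) by exact Hwb.
  pose proof (step n T M i w HM Hi Hwp HQ) as Hst. fold l K in Hst.
  assert (HzM : 0 < vnorm n (zc T M i)).
  { apply (sphere_pos n (l * INR M)). apply Rmult_lt_0_compat; auto. apply lt_0_INR; lia.
    apply zc_sphere; auto. }
  assert (HzN : 0 < vnorm n (zc T N j)).
  { apply (sphere_pos n (l * INR N)). apply Rmult_lt_0_compat; auto. apply lt_0_INR; lia.
    apply zc_sphere; auto. }
  rewrite Dk_sym in Hst.
  pose proof (sqrt_bound _ _ _ HK (Dk_nonneg _ _ _) Hst) as Hs.
  pose proof (koranyi n (dir n (zc T N j)) (dir n (zc T M i)) (dir n w)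
                  (dir_unit n _ HzN) (dir_unit n _ HzM) (dir_unit n _ Hwp)) as Hk.
  fold K q in Hch.
  set (eM := exp (- (l * INR M))) in *. set (eN := exp (- (l * INR N))) in *.
  assert (HeM : 0 < eM) by apply exp_pos.
  assert (HsK : 0 < sqrt K) by (apply sqrt_lt_R0; auto).
  assert (HD1 : sqrt (Dk n (dir n (zc T N j)) (dir n w)) <= sqrt K * eN / (1 - q)).
  { eapply Rle_trans. exact Hk.
    apply Rle_trans with (sqrt K * (eN - eM) / (1 - q) + sqrt K * eM). lra.
    apply Rle_trans with (sqrt K * (eN - eM) / (1 - q) + sqrt K * eM / (1 - q)).
    apply Rplus_le_compat_l. unfold Rdiv. rewrite Rmult_assoc.
    apply Rmult_le_compat_l. lra. rewrite <- (Rmult_1_r eM) at 1. apply Rmult_le_compat_l. lra.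
    rewrite <- Rinv_1. apply Rinv_le_contravar; lra.
    right. field. lra. }
  assert (HeN : 0 < eN) by apply exp_pos.
  set (Dw := Dk n (dir n (zc T N j)) (dir n w)) in *.
  assert (HD2 : Dw <= K * eN^2 / (1 - q)^2).
  { pose proof (Dk_nonneg n (dir n (zc T N j)) (dir n w)). fold Dw in H.
    rewrite <- (sqrt_sqrt Dw H).
    replace (K * eN^2 / (1 - q)^2) with ((sqrt K * eN / (1 - q)) * (sqrt K * eN / (1 - q))).
    2:{ replace K with (sqrt K * sqrt K) at 3 by (apply sqrt_sqrt; lra). field. lra. }
    pose proof (sqrt_pos Dw). apply Rmult_le_compat; auto. }
  split; auto.
  change (center T (Nd N j)) with (Pr n (l * (INR N + / 2)) (zc T N j)).
  set (c := Pr n (l * (INR N + / 2)) (zc T N j)).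
  assert (Hr : 0 < l * (INR N + / 2)).
  { apply Rmult_lt_0_compat; auto. pose proof (pos_INR N). lra. }
  destruct (Pr_spec n _ _ Hr HzN) as [Hsc [t [Ht Hct]]].
  fold c in Hsc, Hct.
  assert (Hcp : 0 < vnorm n c) by (apply (sphere_pos n _ c Hr Hsc)).
  change (vscalR (/ vnorm n c) c) with (dir n c).
  rewrite Hct at 1. rewrite dir_scale by auto.
  assert (Hwd : w = vscalR (vnorm n w) (dir n w)).
  { apply functional_extensionality; intro k. unfold dir, vscalR, vscale, CofR.
    destruct (w k). unfold Cmul; cbn [fst snd]. f_equal; field; lra. }
  rewrite Hwd at 1. rewrite inner_scalR_l.
  assert (HDw : Dw = Cmod (Csub Defs.C1 (inner n (dir n w) (dir n (zc T N j))))) by (unfold Dw; rewrite Dk_sym; reflexivity).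
  set (X := inner n (dir n w) (dir n (zc T N j))) in *.
  apply Rle_trans with ((1 - vnorm n w) + Dw).
  { apply Cmod_le. pose proof (Dk_nonneg n (dir n (zc T N j)) (dir n w)). fold Dw in H. lra.
    unfold Csub, Cadd, Copp, Defs.C1; cbn [fst snd].
    apply final_ineq. lra. apply Cmod_nonneg.
    rewrite HDw. rewrite Cmod_sq. unfold Csub, Cadd, Copp, Defs.C1; cbn [fst snd]. reflexivity. }
  rewrite (sphere_norm n _ c Hsc).
  assert (HEc : exp (2 * (l * (INR N + / 2))) = exp (2 * (l * INR N)) * / q).
  { unfold q. rewrite exp_Ropp, Rinv_inv, <- exp_plus. f_equal. field. }
  rewrite HEc.
  pose proof (e_sq (l * INR N)) as He. fold eN in He. rewrite He in HD2.
  set (a := exp (2 * (l * INR N))) in *.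
  rewrite Hnw.
  assert (h1 : 1 - (Ew - 1) / (Ew + 1) <= 2 * / a).
  { replace (1 - (Ew - 1) / (Ew + 1)) with (2 * / (Ew + 1)) by (field; lra).
    apply Rmult_le_compat_l. lra. apply Rinv_le_contravar; lra. }
  assert (h3 : q * / a <= 1 - (a * / q - 1) / (a * / q + 1)).
  { replace (1 - (a * / q - 1) / (a * / q + 1)) with (2 * q / (a + q)) by (field; split; lra).
    apply (Rmult_le_reg_r (a * (a + q))). nra.
    replace (q * / a * (a * (a + q))) with (q * (a + q)) by (field; lra).
    replace (2 * q / (a + q) * (a * (a + q))) with (2 * q * a) by (field; lra). nra. }
  assert (h4 : 0 <= K / (1 - q)^2) by (apply Rlt_le, Rdiv_lt_0_compat; nra).
  replace (K * / a / (1 - q) ^ 2) with (K / (1 - q)^2 * / a) in HD2 by (field; lra).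
  apply Rle_trans with ((2 + K / (1 - q)^2) / q * (q * / a)).
  - replace ((2 + K / (1 - q)^2) / q * (q * / a)) with (2 * / a + K / (1 - q)^2 * / a) by (field; lra).
    lra.
  - apply Rmult_le_compat_l. apply Rlt_le, Rdiv_lt_0_compat; lra. exact h3.
Qed.
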